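(* The function $\rho^*(p)$ is strictly decreasing in $p$ on $(0,1]$.
   Context: Let $f(z)=\sqrt{2/\pi}\,e^{-z^2/2}$ for $z\ge 0$. For $p\in(0,1]$, $z^*(p)>0$ is the number satisfying $\int_0^{z^*}x^pf(x)\,dx=\int_{z^*}^\infty x^pf(x)\,dx$, and $\rho^*(p)=1-\operatorname{erf}(z^*(p)/\sqrt2)$. *)

(* Defs.v *)
From Stdlib Require Import Reals Lra ClassicalEpsilon.
Open Scope R_scope.

(* Value of the (oriented) Riemann integral of g over [a,b]; chosen by
   Hilbert's epsilon (0 if g is not Riemann integrable there). *)
Definition Rint (g : R -> R) (a b : R) : R :=
  epsilon (inhabits 0)
    (fun v => exists pr : Riemann_integrable g a b, RiemannInt pr = v).

Definition improper_int (g : R -> R) (a L : R) : Prop :=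
  (forall b, a <= b -> inhabited (Riemann_integrable g a b)) /\
  (forall eps, 0 < eps -> exists M, forall b (pr : Riemann_integrable g a b),
       M <= b -> Rabs (RiemannInt pr - L) < eps).

Definition f (z : R) : R := sqrt (2 / PI) * exp (- z ^ 2 / 2).

(* x^p for x >= 0, p > 0, with the convention 0^p = 0 *)
Definition powp (x p : R) : R := if Rle_dec x 0 then 0 else Rpower x p.

Definition erf (x : R) : R := 2 / sqrt PI * Rint (fun t => exp (- t ^ 2)) 0 x.

(* z is a value of z^*(p): z > 0 and
   int_0^z x^p f(x) dx = int_z^oo x^p f(x) dx *)
Definition zstar_spec (p z : R) : Prop :=
  0 < z /\ improper_int (fun x => powp x p * f x) z
                        (Rint (fun x => powp x p * f x) 0 z).

(* rho^* as a function of the threshold z^* *)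
Definition rho_of (z : R) : R := 1 - erf (z / sqrt 2).

(* Main.v *)
Require Import Defs.
From Stdlib Require Import Reals Lra ClassicalEpsilon.
Open Scope R_scope.

Lemma powp_cont0 (p : R) : 0 < p -> continuity_pt (fun x => powp x p) 0.
Proof.
  intros Hp eps Heps.
  exists (Rpower eps (/ p)). split. { unfold Rpower; apply exp_pos. }
  intros x [_ Hx]. simpl in *. unfold Rdist in *.
  unfold powp. destruct (Rle_dec 0 0) as [_|n]; [|lra].
  destruct (Rle_dec x 0) as [h|h].
  - replace (0-0) with 0 by ring; rewrite Rabs_R0; lra.
  - replace (x-0) with x in Hx by ring. rewrite Rabs_right in Hx by lra.
    replace (Rpower x p - 0) with (Rpower x p) by ring. rewrite Rabs_right.
    + replace eps with (Rpower (Rpower eps (/ p)) p).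
      * apply Rlt_Rpower_l; lra.
      * rewrite Rpower_mult, Rinv_l by lra. apply Rpower_1; lra.
    + unfold Rpower; left; apply exp_pos.
Qed.

Lemma powp_cont (p : R) : 0 < p -> continuity (fun x => powp x p).
Proof.
  intros Hp x. destruct (Rtotal_order x 0) as [h|[h|h]].
  - apply continuity_pt_locally_ext with (f := fun _ => 0) (a := - x).
    + lra.
    + intros y Hy. unfold Rdist in Hy. unfold powp.
      destruct (Rle_dec y 0); auto. exfalso.
      apply Rabs_def2 in Hy. lra.
    + apply continuity_pt_const. intros a b; reflexivity.
  - subst; apply powp_cont0; auto.
  - apply continuity_pt_locally_ext with (f := fun x => Rpower x p) (a := x).
    + lra.
    + intros y Hy. unfold Rdist in Hy. unfold powp.
      destruct (Rle_dec y 0); auto. exfalso.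
      apply Rabs_def2 in Hy. lra.
    + apply derivable_continuous_pt. econstructor. apply derivable_pt_lim_power; auto.
Qed.

Lemma f_cont : continuity Defs.f.
Proof.
  unfold Defs.f. intro x.
  apply continuity_pt_mult.
  - apply continuity_pt_const. intros a b; reflexivity.
  - apply (continuity_pt_comp (fun x => - x ^ 2 / 2) exp).
    + reg.
    + apply derivable_continuous_pt. apply derivable_pt_exp.
Qed.

Lemma g_cont (p : R) : 0 < p -> continuity (fun x => powp x p * Defs.f x).
Proof. intros Hp x. apply continuity_pt_mult. apply powp_cont; auto. apply f_cont. Qed.

Lemma Rint_eq g a b (pr : Riemann_integrable g a b) : Rint g a b = RiemannInt pr.
Proof.
  unfold Rint.
  destruct (epsilon_spec (inhabits 0) (fun v => exists pr : Riemann_integrable g a b, RiemannInt pr = v)) as [pr' H].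
  - exists (RiemannInt pr); exists pr; reflexivity.
  - rewrite <- H. apply RiemannInt_P5.
Qed.

Lemma cont_int h a b : continuity h -> a <= b -> Riemann_integrable h a b.
Proof. intros Hc Hab. apply continuity_implies_RiemannInt; auto. Qed.

Lemma int_lower h a b m (pr : Riemann_integrable h a b) :
  a <= b -> (forall x, a < x < b -> m <= h x) -> m * (b - a) <= RiemannInt pr.
Proof.
  intros Hab H.
  rewrite <- (RiemannInt_P15 (RiemannInt_P14 a b m)).
  apply RiemannInt_P19; auto.
Qed.

Lemma int_pos h a u v e k (pr : Riemann_integrable h a e) :
  continuity h -> a <= u -> u < v -> v <= e -> 0 < k ->
  (forall x, a < x < e -> 0 <= h x) -> (forall x, u < x < v -> k <= h x) ->
  0 < RiemannInt pr.
Proof.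
  intros Hc H1 H2 H3 Hk Hn Hkk.
  pose proof (cont_int h a u Hc H1) as p1.
  pose proof (cont_int h u v Hc (Rlt_le _ _ H2)) as p2.
  pose proof (cont_int h v e Hc H3) as p3.
  pose proof (cont_int h a v Hc ltac:(lra)) as p12.
  rewrite <- (RiemannInt_P26 p12 p3 pr), <- (RiemannInt_P26 p1 p2 p12).
  pose proof (int_lower h a u 0 p1 H1 ltac:(intros; apply Hn; lra)).
  pose proof (int_lower h u v k p2 ltac:(lra) Hkk).
  pose proof (int_lower h v e 0 p3 H3 ltac:(intros; apply Hn; lra)).
  assert (0 < k * (v - u)) by (apply Rmult_lt_0_compat; lra).
  lra.
Qed.

Lemma powp_nonneg x p : 0 <= powp x p.
Proof. unfold powp; destruct (Rle_dec x 0). lra. unfold Rpower; left; apply exp_pos. Qed.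

Lemma f_pos x : 0 < Defs.f x.
Proof. unfold Defs.f. apply Rmult_lt_0_compat; [|apply exp_pos].
  apply sqrt_lt_R0. pose proof PI_RGT_0. apply Rdiv_lt_0_compat; lra. Qed.

Lemma powp_split x p1 p2 : 0 < x -> powp x p2 = Rpower x (p2 - p1) * powp x p1.
Proof. intros. unfold powp. destruct (Rle_dec x 0). lra.
  rewrite <- Rpower_plus. f_equal; ring. Qed.

Lemma f_anti x y : 0 <= x <= y -> Defs.f y <= Defs.f x.
Proof. intros. unfold Defs.f. apply Rmult_le_compat_l. apply sqrt_pos.
  destruct (Req_dec x y). subst; lra. left; apply exp_increasing.
  assert (x^2 < y^2) by (simpl; nra). lra. Qed.

Lemma rpow_pos x d : 0 < Rpower x d.
Proof. unfold Rpower; apply exp_pos. Qed.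

Lemma z_mono p1 p2 z1 z2 : 0 < p1 -> p1 < p2 ->
  zstar_spec p1 z1 -> zstar_spec p2 z2 -> z1 < z2.
Proof.
  intros Hp1 Hp12 [Hz1 [_ H1]] [Hz2 [_ H2]].
  set (g1 := fun x => powp x p1 * Defs.f x) in *.
  set (g2 := fun x => powp x p2 * Defs.f x) in *.
  assert (C1 : continuity g1) by (apply g_cont; auto).
  assert (C2 : continuity g2) by (apply g_cont; lra).
  set (d := p2 - p1). set (c := Rpower z1 d).
  assert (Hc : 0 < c) by apply rpow_pos.
  destruct (Rlt_or_le z1 z2) as [hz|hz]; [exact hz|exfalso].
  pose proof (cont_int g1 0 z1 C1 ltac:(lra)) as q1.
  pose proof (cont_int g2 0 z2 C2 ltac:(lra)) as q2.
  pose proof (cont_int g2 z2 z1 C2 hz) as qJ.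
  pose proof (cont_int g2 0 z1 C2 ltac:(lra)) as qK.
  rewrite (Rint_eq _ _ _ q1) in H1. rewrite (Rint_eq _ _ _ q2) in H2.
  set (I1 := RiemannInt q1) in *. set (I2 := RiemannInt q2) in *.
  set (J := RiemannInt qJ). set (K := RiemannInt qK).
  assert (HK : I2 + J = K) by apply RiemannInt_P26.
  assert (HJ : 0 <= J).
  { pose proof (int_lower g2 z2 z1 0 qJ hz ltac:(intros; apply Rmult_le_pos; [apply powp_nonneg|left; apply f_pos])). unfold J. lra. }
  assert (Hpt : forall x, z1 <= x -> c * g1 x <= g2 x).
  { intros x Hx. unfold g1, g2. rewrite (powp_split x p1 p2) by lra.
    rewrite <- Rmult_assoc. apply Rmult_le_compat_r. left; apply f_pos.
    apply Rmult_le_compat_r. apply powp_nonneg. apply Rle_Rpower_l; unfold d; lra. }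
  assert (HT : c * I1 <= I2 - J).
  { apply Rnot_lt_le. intro Hlt.
    set (eps := (c * I1 - (I2 - J)) / (2 * (1 + c))).
    assert (He : 0 < eps) by (apply Rdiv_lt_0_compat; lra).
    destruct (H1 eps He) as [M1 HM1]. destruct (H2 eps He) as [M2 HM2].
    set (b := Rmax z1 (Rmax M1 M2)).
    assert (Hb1 : z1 <= b) by apply Rmax_l.
    assert (HbM1 : M1 <= b) by (unfold b; eapply Rle_trans; [apply Rmax_l|apply Rmax_r]).
    assert (HbM2 : M2 <= b) by (unfold b; eapply Rle_trans; [apply Rmax_r|apply Rmax_r]).
    pose proof (cont_int g1 z1 b C1 Hb1) as r1.
    pose proof (cont_int g2 z2 b C2 ltac:(lra)) as r2.
    pose proof (cont_int g2 z1 b C2 Hb1) as r2'.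
    pose proof (HM1 b r1 HbM1) as E1. pose proof (HM2 b r2 HbM2) as E2.
    assert (S : J + RiemannInt r2' = RiemannInt r2) by apply RiemannInt_P26.
    pose proof (RiemannInt_P10 c (RiemannInt_P14 z1 b 0) r1) as r3.
    pose proof (RiemannInt_P13 (RiemannInt_P14 z1 b 0) r1 r3) as E3.
    rewrite (RiemannInt_P15 (RiemannInt_P14 z1 b 0)) in E3.
    assert (L : RiemannInt r3 <= RiemannInt r2').
    { apply RiemannInt_P19; auto. intros x Hx. unfold fct_cte. pose proof (Hpt x ltac:(lra)). lra. }
    apply Rabs_def2 in E1. apply Rabs_def2 in E2.
    assert (c * (RiemannInt r1) > c * (I1 - eps)) by (apply Rmult_lt_compat_l; lra).
    assert (eps * (2 * (1 + c)) = c * I1 - (I2 - J)) by (unfold eps; field; lra).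
    nra. }
  set (h := fun x => c * g1 x - g2 x).
  assert (Ch : continuity h).
  { intro x. unfold h. apply continuity_pt_minus; [apply continuity_pt_scal|]; auto. }
  pose proof (cont_int h 0 z1 Ch ltac:(lra)) as qh.
  assert (Hh : forall x, 0 < x -> h x = (c - Rpower x d) * powp x p1 * Defs.f x).
  { intros x Hx. unfold h, g1, g2. rewrite (powp_split x p1 p2) by lra. fold d. ring. }
  set (k := (c - Rpower (z1/2) d) * Rpower (z1/4) p1 * Defs.f (z1/2)).
  assert (Hd : 0 < d) by (unfold d; lra).
  assert (Hk1 : 0 < c - Rpower (z1/2) d).
  { unfold c. pose proof (Rlt_Rpower_l (z1/2) z1 d Hd ltac:(lra)). lra. }
  assert (Hk : 0 < k).
  { unfold k. apply Rmult_lt_0_compat; [apply Rmult_lt_0_compat|]; auto using rpow_pos, f_pos. }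
  assert (Pos : 0 < RiemannInt qh).
  { apply (int_pos h 0 (z1/4) (z1/2) z1 k qh Ch); try lra.
    - intros x Hx. rewrite Hh by lra. apply Rmult_le_pos; [apply Rmult_le_pos|].
      + unfold c. pose proof (Rle_Rpower_l x z1 d ltac:(lra) ltac:(lra)). lra.
      + apply powp_nonneg.
      + left; apply f_pos.
    - intros x Hx. rewrite Hh by lra. unfold k.
      assert (A1 : Rpower x d <= Rpower (z1/2) d) by (apply Rle_Rpower_l; lra).
      assert (A2 : Rpower (z1/4) p1 <= powp x p1).
      { unfold powp. destruct (Rle_dec x 0). lra. apply Rle_Rpower_l; lra. }
      assert (A3 : Defs.f (z1/2) <= Defs.f x) by (apply f_anti; lra).
      pose proof (rpow_pos (z1/4) p1). pose proof (f_pos (z1/2)).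
      apply Rmult_le_compat; try lra.
      + apply Rmult_le_pos; lra.
      + apply Rmult_le_compat; lra. }
  pose proof (RiemannInt_P10 1 qh qK) as r.
  pose proof (RiemannInt_P13 qh qK r) as Er.
  pose proof (RiemannInt_P10 c (RiemannInt_P14 0 z1 0) q1) as r4.
  pose proof (RiemannInt_P13 (RiemannInt_P14 0 z1 0) q1 r4) as E4.
  rewrite (RiemannInt_P15 (RiemannInt_P14 0 z1 0)) in E4.
  assert (RiemannInt r <= RiemannInt r4).
  { apply RiemannInt_P19; try lra. intros x _. unfold h, fct_cte. lra. }
  unfold K, I1 in *. lra.
Qed.

Lemma e_cont : continuity (fun t => exp (- t ^ 2)).
Proof. intro x. apply (continuity_pt_comp (fun t => - t ^ 2) exp). reg.
  apply derivable_continuous_pt, derivable_pt_exp. Qed.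

Lemma erf_mono a b : 0 < a < b -> erf a < erf b.
Proof.
  intros H. unfold erf.
  pose proof (cont_int _ 0 a e_cont ltac:(lra)) as pa.
  pose proof (cont_int _ 0 b e_cont ltac:(lra)) as pb.
  pose proof (cont_int _ a b e_cont ltac:(lra)) as pab.
  rewrite (Rint_eq _ _ _ pa), (Rint_eq _ _ _ pb).
  rewrite <- (RiemannInt_P26 pa pab pb).
  assert (0 < RiemannInt pab).
  { apply (int_pos _ a a b b (exp (- b ^ 2)) pab e_cont); try lra.
    - apply exp_pos.
    - intros; left; apply exp_pos.
    - intros x Hx. left. apply exp_increasing. simpl. nra. }
  assert (0 < 2 / sqrt PI).
  { apply Rdiv_lt_0_compat. lra. apply sqrt_lt_R0. pose proof PI_RGT_0; lra. }
  nra.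
Qed.

Theorem proposition1 :
  forall p1 p2 z1 z2 : R,
    0 < p1 -> p1 < p2 -> p2 <= 1 ->
    zstar_spec p1 z1 -> zstar_spec p2 z2 ->
    rho_of z2 < rho_of z1.
Proof.
  intros p1 p2 z1 z2 H1 H2 H3 S1 S2.
  pose proof (z_mono p1 p2 z1 z2 H1 H2 S1 S2).
  destruct S1 as [Hz1 _].
  unfold rho_of.
  assert (Hs : 0 < sqrt 2) by (apply sqrt_lt_R0; lra).
  assert (z1 / sqrt 2 < z2 / sqrt 2) by (apply Rmult_lt_compat_r; [apply Rinv_0_lt_compat|]; lra).
  assert (0 < z1 / sqrt 2) by (apply Rdiv_lt_0_compat; lra).
  pose proof (erf_mono (z1 / sqrt 2) (z2 / sqrt 2) ltac:(lra)). lra.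
Qed.
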